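(* Let $w \in S_n$. If $w$ contains a $321$ pattern, then the Schubert polynomial $\mathfrak{S}_w$ is not a complete homogeneous monomial.
   Context: $h^i_j$ is the complete homogeneous symmetric polynomial of degree $j$ in $x_1,\dots,x_i$; a complete homogeneous monomial is a product $h^1_{a_1}h^2_{a_2}\cdots$ with nonnegative integers $a_i$, finitely many nonzero. Schubert polynomials: $\mathfrak{S}_{w_0} = x_1^{n-1}\cdots x_{n-1}$ for the longest $w_0 \in S_n$, and $\partial_i\mathfrak{S}_w = \mathfrak{S}_{ws_i}$ if $\ell(ws_i)=\ell(w)-1$, $0$ otherwise, where $\partial_i f = (f-s_if)/(x_i-x_{i+1})$. $w$ contains a $321$ pattern if there are $i<j<k$ with $w(i)>w(j)>w(k)$. *)

(* Defs.v *)
From HB Require Import structures.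
From mathcomp Require Import all_boot all_order all_algebra all_fingroup.
From mathcomp Require Import mpoly.
Set Implicit Arguments. Unset Strict Implicit. Unset Printing Implicit Defensive.
Import Order.TTheory GRing.Theory Num.Theory.
Local Open Scope ring_scope.

(* Polynomials in the variables x_1, ..., x_N are {mpoly int[N]};
   x_{k+1} is represented by [var k] (and is 0 if k >= N, never used). *)
Definition var (N : nat) (k : nat) : {mpoly int[N]} :=
  match insub k with Some i => 'X_i | None => 0 end.

Definition hcomp (N : nat) (i j : nat) : {mpoly int[N]} :=
  \sum_(m : 'X_{1..N < j.+1} |
          (mdeg (m : 'X_{1..N}) == j) && [forall k : 'I_N, (i <= k)%N ==> (m k == 0%N)])
     'X_[(m : 'X_{1..N})].

Definition complete_hom_monomial (N : nat) (f : {mpoly int[N]}) : Prop :=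
  exists a : 'I_N -> nat, f = \prod_(k < N) hcomp N k.+1 (a k).

(* the substitution s_i exchanging x_{i+1} and x_{i+2} (0-based i) *)
Definition swapvar (N i : nat) (p : {mpoly int[N]}) : {mpoly int[N]} :=
  comp_mpoly [tuple var N (if val k == i then i.+1
                           else if val k == i.+1 then i else val k) | k < N] p.

Definition perm_length (n : nat) (w : {perm 'I_n}) : nat :=
  #|[set p : 'I_n * 'I_n | (p.1 < p.2)%N && (w p.2 < w p.1)%N]|.

Definition w0 (n : nat) : {perm 'I_n} := perm (@rev_ord_inj n).

(* S is the family of Schubert polynomials of S_n (variables x_1..x_N, n <= N):
   S_{w0} = x_1^{n-1} x_2^{n-2} ... x_{n-1}, and for every simple transposition
   s_i = (i i+1),  d_i S_w = S_{w s_i} if l(w s_i) = l(w) - 1, and 0 otherwise,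
   where d_i f = (f - s_i f)/(x_i - x_{i+1}); the division is unfolded as
   (x_i - x_{i+1}) * d_i f = f - s_i f (the ring is an integral domain). *)
Definition schubert_family (n N : nat) (S : {perm 'I_n} -> {mpoly int[N]}) : Prop :=
  S (w0 n) = \prod_(k < n) var N k ^+ (n.-1 - k)
  /\ forall (w : {perm 'I_n}) (i j : 'I_n), val j = (val i).+1 ->
       let ws := (tperm i j * w)%g in   (* ws = w o s_i *)
       if (perm_length ws).+1 == perm_length w
       then (var N i - var N j) * S ws = S w - swapvar i (S w)
       else S w - swapvar i (S w) = 0.

Definition contains321 (n : nat) (w : {perm 'I_n}) : Prop :=
  exists i j k : 'I_n, [/\ (i < j)%N, (j < k)%N, (w j < w i)%N & (w k < w j)%N].

(* Main.v *)
Require Import Defs.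
From HB Require Import structures.
From mathcomp Require Import all_boot all_order all_algebra all_fingroup.
From mathcomp Require Import mpoly.
From mathcomp Require Import zify.
Set Implicit Arguments. Unset Strict Implicit. Unset Printing Implicit Defensive.
Import Order.TTheory GRing.Theory Num.Theory.

Definition Bset (n : nat) (u : {perm 'I_n}) (k : nat) : {set 'I_n} :=
  [set j : 'I_n | (k <= j)%N &&
     [exists j' : 'I_n, [&& (k <= j')%N, (j' < j)%N & (u j < u j')%N]]].
Definition Bd (n : nat) (u : {perm 'I_n}) (k : nat) : nat := #|Bset u k|.

Definition invset (n : nat) (w : {perm 'I_n}) :=
  [set p : 'I_n * 'I_n | (p.1 < p.2)%N && (w p.2 < w p.1)%N].

Lemma perm_lengthE (n : nat) (w : {perm 'I_n}) : perm_length w = #|invset w|.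
Proof. by []. Qed.

Lemma B0_lt (n : nat) (u : {perm 'I_n}) : contains321 u -> (Bd u 0 < perm_length u)%N.
Proof.
case=> a [b [c [hab hbc hba hcb]]].
pose f := fun j : 'I_n => (odflt j [pick j' : 'I_n | (j' < j)%N && (u j < u j')%N], j).
have finj : injective f by move=> x y [_ ->].
rewrite /Bd perm_lengthE -(card_imset _ finj).
apply: proper_card; apply/properP; split.
  apply/subsetP => p /imsetP [j]; rewrite inE leq0n /= => /existsP [j' /andP [h1 h2]] ->.
  rewrite inE /f /=; case: pickP => [x /andP [-> ->] //|/(_ j')].
  by rewrite h1 h2.
have hac : (a, c) \in invset u by rewrite inE /=; apply/andP; split; lia.
have hbc' : (b, c) \in invset u by rewrite inE /=; apply/andP; split; lia.
case: (boolP ((a, c) \in [set f x | x in Bset u 0])) => [/imsetP [x _ e]|hn]; last first.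
  by exists (a, c).
exists (b, c) => //; apply/imsetP => [[y _ e']].
case: e => ea ec; case: e' => eb ec'.
rewrite -ec in ea; rewrite -ec' in eb; rewrite ea eb in hab.
by rewrite ltnn in hab.
Qed.

Lemma ord_eqE (n : nat) (a b : 'I_n) : (a == b) = ((a : nat) == b).
Proof. by []. Qed.

Lemma ord_neq (n : nat) (a b : 'I_n) : a <> b -> (a : nat) <> b.
Proof. by move=> h e; apply: h; apply: val_inj. Qed.

Ltac natify := repeat match goal with
 | H : ~ (@eq ?T ?a ?b) |- _ =>
     lazymatch T with nat => fail | _ =>
     let e := fresh "e" in have e := ord_neq H; clear H end
 end.

Lemma len_desc (n : nat) (i j : 'I_n) (w : {perm 'I_n}) :
  (j : nat) = (i : nat).+1 -> (w j < w i)%N ->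
  (perm_length (tperm i j * w)%g).+1 = perm_length w.
Proof.
move=> hij hw; rewrite !perm_lengthE.
pose s := tperm i j.
pose sig := fun p : 'I_n * 'I_n => (s p.1, s p.2).
have sinv : involutive sig by move=> [x y]; rewrite /sig /= !tpermK.
have E : invset w = (i, j) |: (sig @^-1: invset (s * w)%g).
  apply/setP => [[x y]]; rewrite !inE /= !permM !tpermK xpair_eqE.
  rewrite /s; case: (tpermP i j x) => [->|->|hx1 hx2];
  case: (tpermP i j y) => [->|->|hy1 hy2];
  rewrite ?ord_eqE /= ?eqxx; natify; lia.
rewrite E cardsU1 card_preimset; last exact: inv_inj.
rewrite !inE /= /s tpermL tpermR; lia.
Qed.

Lemma chain (n : nat) (u : {perm 'I_n}) (i : 'I_n)
    (H : forall a b : 'I_n, (b : nat) = (a : nat).+1 -> (b <= i)%N -> (u b < u a)%N) :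
  forall a : 'I_n, (a < i)%N -> (u i < u a)%N.
Proof.
suff S d : forall a : 'I_n, (i - a)%N = d.+1 -> (u i < u a)%N.
  by move=> a hai; apply: (S (i - a).-1); lia.
elim: d => [|d IH] a had.
  have hb : (a.+1 < n)%N by have := ltn_ord i; lia.
  have -> : i = Ordinal hb by apply: val_inj => /=; lia.
  by apply: H => //=; lia.
have hb : (a.+1 < n)%N by have := ltn_ord i; lia.
apply: (ltn_trans (IH (Ordinal hb) _)); first by rewrite /=; lia.
by apply: H => //=; lia.
Qed.

Lemma card_gt (n k : nat) : #|[set j : 'I_n | (k < j)%N]| = n - k.+1.
Proof.
rewrite -sum1_card (eq_bigl (fun j : 'I_n => k < j)); last by move=> j; rewrite inE.
rewrite big_mkcond /= -(big_mkord xpredT (fun j => if k < j then 1 else 0)).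
case: (leqP n k.+1) => hn.
  rewrite (eq_big_nat _ _ (F2 := fun _ => 0)) ?sum_nat_const_nat; first lia.
  by move=> j hj; case: ifP => //; lia.
rewrite (big_cat_nat _ (n:=k.+1)) //=; last lia.
rewrite (eq_big_nat _ _ (F2 := fun _ => 0)) ?sum_nat_const_nat; last first.
  by move=> j hj; case: ifP => //; lia.
rewrite (eq_big_nat _ _ (F2 := fun _ => 1)) ?sum_nat_const_nat; last first.
  by move=> j hj; case: ifP => //; lia.
lia.
Qed.

Lemma bset_asc (n : nat) (u : {perm 'I_n}) (i j : 'I_n) :
  (j : nat) = (i : nat).+1 -> (u i < u j)%N -> Bset u i = Bset u i.+1.
Proof.
move=> hij hu; apply/setP => x; rewrite !inE.
apply/andP/andP => [[h1 /existsP [y /and3P [y1 y2 y3]]]|[h1 /existsP [y /and3P [y1 y2 y3]]]].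
  case: (eqVneq (y : nat) i) => [e|ne].
    have ey : y = i by apply: val_inj.
    rewrite ey in y3.
    have xj : (x : nat) != j.
      apply/eqP => e'; have ex : x = j by apply: val_inj.
      by rewrite ex in y3; lia.
    split; first lia.
    by apply/existsP; exists j; apply/and3P; split; lia.
  split; first lia.
  by apply/existsP; exists y; apply/and3P; split; lia.
split; first lia.
by apply/existsP; exists y; apply/and3P; split; lia.
Qed.

Lemma bset_step_i (n : nat) (u : {perm 'I_n}) (i j : 'I_n) :
  (j : nat) = (i : nat).+1 -> (u i < u j)%N ->
  Bset (tperm i j * u)%g i \subset j |: Bset u i.+1.
Proof.
move=> hij hu; rewrite -(bset_asc hij hu).
apply/subsetP => x; rewrite !inE => /andP [h1 /existsP [y /and3P [y1 y2 y3]]].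
rewrite !permM in y3.
case: (eqVneq x j) => [-> //|xj]; apply/orP; right.
have xi : x != i by apply/eqP => e; rewrite e in y2; lia.
rewrite tpermD 1?eq_sym // in y3.
have xjn : (x : nat) != j := xj.
have xin : (x : nat) != i := xi.
apply/andP; split => //; apply/existsP; exists (tperm i j y).
move: y3; case: tpermP => [e|e|e1 e2] y3; rewrite ?y3 ?andbT; natify.
- rewrite e in y1 y2 *; apply/andP; split; lia.
- rewrite e in y1 y2 *; apply/andP; split; lia.
- apply/andP; split; lia.
Qed.

Lemma bset_step_i1 (n : nat) (u : {perm 'I_n}) (i j : 'I_n) :
  (j : nat) = (i : nat).+1 -> (u i < u j)%N ->
  Bset (tperm i j * u)%g i.+1 \subset Bset u i.+1.
Proof.
move=> hij hu.
apply/subsetP => x; rewrite !inE => /andP [h1 /existsP [y /and3P [y1 y2 y3]]].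
rewrite !permM in y3.
have xj : x != j by apply/eqP => e; rewrite e in y2; lia.
have xi : x != i by apply/eqP => e; rewrite e in y2; lia.
have xjn : (x : nat) != j := xj.
have yi : (y : nat) != i by lia.
rewrite tpermD 1?eq_sym // in y3.
apply/andP; split => //; apply/existsP.
move: y3; case: tpermP => [e|e|e1 e2] y3; natify.
- by rewrite e in yi; rewrite eqxx in yi.
- exists j; rewrite e in y1 y2 *; apply/and3P; split; lia.
- by exists y; apply/and3P; split; lia.
Qed.

Lemma bset_step_far (n : nat) (u : {perm 'I_n}) (i j : 'I_n) (k : nat) :
  (j : nat) = (i : nat).+1 ->
  (forall a : 'I_n, (a < i)%N -> (u i < u a)%N) ->
  k != i -> k != i.+1 ->
  Bset (tperm i j * u)%g k \subset tperm i j @^-1: Bset u k.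
Proof.
move=> hij hch ki ki1.
apply/subsetP => x; rewrite !inE => /andP [h1 /existsP [y /and3P [y1 y2 y3]]].
rewrite !permM in y3.
case: (ltnP i.+1 k) => hk.
  have xi : x != i by apply/eqP => e; rewrite e in h1; lia.
  have xj : x != j by apply/eqP => e; rewrite e in h1; lia.
  have yi : y != i by apply/eqP => e; rewrite e in y1; lia.
  have yj : y != j by apply/eqP => e; rewrite e in y1; lia.
  rewrite !tpermD 1?eq_sym // in y3 *; rewrite 1?eq_sym //.
  by rewrite h1 /=; apply/existsP; exists y; apply/and3P; split.
have hki : (k < i)%N by lia.
move: y3; case: (tpermP i j x) => [ex|ex|ex1 ex2] y3; natify.
- rewrite ex in y2 h1 *.
  have yi : y != i by apply/eqP => e; rewrite e in y2; lia.
  have yj : y != j by apply/eqP => e; rewrite e in y2; lia.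
  rewrite tpermD 1?eq_sym // in y3.
  apply/andP; split; first lia.
  by apply/existsP; exists y; apply/and3P; split; lia.
- have hk' : (k < n)%N by have := ltn_ord i; lia.
  apply/andP; split; first lia.
  apply/existsP; exists (Ordinal hk'); apply/and3P; split => //=.
  by apply: hch => /=.
- apply/andP; split; first lia.
  apply/existsP; exists (tperm i j y).
  move: y3; case: (tpermP i j y) => [ey|ey|ey1 ey2] y3; natify;
    rewrite ?ey in y1 y2 *; apply/and3P; split; lia.
Qed.

Lemma Bd_far (n : nat) (u : {perm 'I_n}) (i j : 'I_n) (k : nat) :
  (j : nat) = (i : nat).+1 ->
  (forall a : 'I_n, (a < i)%N -> (u i < u a)%N) ->
  k != i -> k != i.+1 -> (Bd (tperm i j * u)%g k <= Bd u k)%N.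
Proof.
move=> hij hch ki ki1; rewrite /Bd.
rewrite -(card_preimset (Bset u k) (@perm_inj _ (tperm i j))).
exact/subset_leq_card/bset_step_far.
Qed.

Lemma Bd_near (n : nat) (u : {perm 'I_n}) (i j : 'I_n) :
  (j : nat) = (i : nat).+1 -> (u i < u j)%N ->
  (maxn (Bd (tperm i j * u)%g i) (Bd (tperm i j * u)%g i.+1) <= (Bd u i).+1)%N /\
  (maxn (Bd (tperm i j * u)%g i) (Bd (tperm i j * u)%g i.+1) <= (Bd u i.+1).+1)%N.
Proof.
move=> hij hu.
have e : Bd u i = Bd u i.+1 by rewrite /Bd (bset_asc hij hu).
have h1 : (Bd (tperm i j * u)%g i <= (Bd u i.+1).+1)%N.
  apply: (leq_trans (subset_leq_card (bset_step_i hij hu))).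
  by rewrite cardsU1; case: (j \notin _).
have h2 : (Bd (tperm i j * u)%g i.+1 <= Bd u i.+1)%N.
  exact/subset_leq_card/bset_step_i1.
rewrite e geq_max; split; apply/andP; split => //; lia.
Qed.

Lemma noasc_w0 (n : nat) (u : {perm 'I_n}) :
  (forall a b : 'I_n, (b : nat) = (a : nat).+1 -> (u b < u a)%N) -> u = w0 n.
Proof.
move=> H.
have up : forall k (a : 'I_n), (a : nat) = k -> (u a + a <= n.-1)%N.
  elim=> [|k IH] a ha.
    by have := ltn_ord (u a); lia.
  have hk : (k < n)%N by have := ltn_ord a; lia.
  have := IH (Ordinal hk) erefl; have := H (Ordinal hk) a; rewrite /= ha.
  by move=> /(_ erefl); lia.
have lo : forall d (a : 'I_n), (n.-1 - a)%N = d -> (n.-1 <= u a + a)%N.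
  elim=> [|d IH] a ha.
    by lia.
  have hb : (a.+1 < n)%N by have := ltn_ord a; lia.
  have := IH (Ordinal hb) (ltac:(rewrite /=; lia)).
  have := H a (Ordinal hb) erefl; rewrite /=; lia.
apply/permP => a; apply: val_inj; rewrite /w0 permE /=.
have := up _ a erefl; have := lo _ a erefl; lia.
Qed.

Lemma w0_len (n : nat) : perm_length (w0 n) = (\sum_(k < n) (n - k.+1))%N.
Proof.
rewrite perm_lengthE.
have -> : invset (w0 n) = [set p : 'I_n * 'I_n | (p.1 < p.2)%N].
  apply/setP => [[x y]]; rewrite !inE /= /w0 !permE /=.
  by case: (ltnP x y) => h //=; have := ltn_ord x; have := ltn_ord y; lia.
rewrite -sum1_card big_mkcond /=.
under eq_bigr do rewrite inE.
rewrite -(pair_bigA _ (fun x y : 'I_n => if (x < y)%N then 1%N else 0%N)) /=.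
apply: eq_bigr => x _; rewrite -big_mkcond sum1_card -card_gt.
by apply: eq_card => y; rewrite !inE.
Qed.

Lemma w0_bd (n : nat) (k : 'I_n) : (n - k.+1 <= Bd (w0 n) k)%N.
Proof.
rewrite -card_gt /Bd; apply: subset_leq_card; apply/subsetP => x; rewrite !inE => hx.
rewrite ltnW //=; apply/existsP; exists k; rewrite leqnn hx /w0 !permE /=.
by have := ltn_ord x; lia.
Qed.

Local Open Scope ring_scope.

Lemma varE (N : nat) (k : 'I_N) : var N k = 'X_k.
Proof. by rewrite /var; case: insubP => [k' _ /val_inj -> | ] //; rewrite ltn_ord. Qed.

Lemma coefXM (N : nat) (a : 'I_N) (g : {mpoly int[N]}) (m : 'X_{1..N}) :
  ('X_a * g)@_(m + U_(a))%MM = g@_m.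
Proof. by rewrite mulrC addmC mcoeffMX. Qed.

Lemma coefXM0 (N : nat) (b : 'I_N) (g : {mpoly int[N]}) (m : 'X_{1..N}) :
  m b = 0%N -> ('X_b * g)@_m = 0.
Proof.
move=> hb; apply/eqP; rewrite mcoeff_eq0; apply/negP => hm.
move: hm; rewrite mulrC (perm_mem (msuppMX _ _)) => /mapP [m' _ hm].
by move: hb; rewrite hm mnmDE mnm1E eqxx.
Qed.

Lemma coefD2 (N : nat) (a b : 'I_N) (g : {mpoly int[N]}) (m : 'X_{1..N}) :
  a != b ->
  (('X_a - 'X_b) * g)@_(m + U_(a))%MM =
    g@_m - (if (0 < m b)%N then g@_(m + U_(a) - U_(b))%MM else 0).
Proof.
move=> ab; rewrite mulrBl mcoeffB coefXM; congr (_ - _).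
case: ifP => hb.
  have le : (U_(b) <= m + U_(a))%MM.
    apply/mnm_lepP => k; rewrite mnmDE !mnm1E.
    by case: (b =P k) => [<-|_] /=; lia.
  by rewrite -{1}(submK le) coefXM.
apply: coefXM0; rewrite mnmDE mnm1E (negbTE ab) addn0.
by move/negbT: hb; rewrite -eqn0Ngt => /eqP.
Qed.

Lemma mnm_le_mdeg (N : nat) (m : 'X_{1..N}) (a : 'I_N) : (m a <= mdeg m)%N.
Proof. by rewrite mdegE (bigD1 a) //= leq_addr. Qed.

Lemma extremal (N : nat) (a b : 'I_N) (g : {mpoly int[N]})
    (Q bad : 'X_{1..N} -> bool) :
  a != b ->
  (forall m, (('X_a - 'X_b) * g)@_m != 0 -> Q m) ->
  (forall m, bad m -> (0 < m b)%N -> bad (m + U_(a) - U_(b))%MM) ->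
  (forall m, bad m -> ~~ Q (m + U_(a))%MM) ->
  forall m, g@_m != 0 -> ~~ bad m.
Proof.
move=> ab hQ hbad hnQ.
have hK m : g@_m != 0 -> (m a < msize g)%N.
  rewrite -mcoeff_msupp => /msize_mdeg_lt; apply: leq_ltn_trans.
  exact: mnm_le_mdeg.
suff H r (m : 'X_{1..N}) : (msize g - m a <= r)%N -> g@_m != 0 -> bad m -> False.
  by move=> m gm; apply/negP => bm; exact: (H _ m (leqnn _) gm bm).
elim: r m => [|r IH] m hr gm bm.
  by have := hK m gm; lia.
have := hQ (m + U_(a))%MM; rewrite coefD2 //.
have -> : (if (0 < m b)%N then g@_(m + U_(a) - U_(b))%MM else 0) = 0.
  case: ifP => // hb; apply/eqP; apply/negPn/negP => gm'.
  apply: (IH _ _ gm' (hbad _ bm hb)).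
  have := hK m gm; move: hr; rewrite mnmBE mnmDE !mnm1E eqxx eq_sym (negbTE ab).
  lia.
by rewrite subr0 => /(_ gm); apply/negP; exact: hnQ.
Qed.

Definition msw (N : nat) (s : {perm 'I_N}) (m : 'X_{1..N}) : 'X_{1..N} :=
  [multinom m (s k) | k < N].

Lemma msw_mdeg (N : nat) (s : {perm 'I_N}) m : mdeg (msw s m) = mdeg m.
Proof.
rewrite !mdegE (reindex_inj (@perm_inj _ s^-1)) /=.
by apply: eq_bigr => k _; rewrite mnmE permKV.
Qed.

Lemma tnth_sw (N i : nat) (hi : (i.+1 < N)%N) (k : 'I_N) :
  tnth [tuple var N (if val k == i then i.+1
                     else if val k == i.+1 then i else val k) | k < N] k
  = 'X_(tperm (Ordinal (ltnW hi)) (Ordinal hi) k).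
Proof.
rewrite tnth_mktuple.
case: (k =P Ordinal (ltnW hi)) => [->|ha]; first by rewrite tpermL /= eqxx -(varE (Ordinal hi)).
case: (k =P Ordinal hi) => [->|hb].
  rewrite tpermR /= eqxx (_ : (i.+1 == i) = false); last by lia.
  by rewrite -(varE (Ordinal (ltnW hi))).
rewrite tpermD; try by apply/eqP => e; rewrite -e in ha hb.
have -> : (val k == i) = false by apply/eqP => e; apply: ha; apply: val_inj.
have -> : (val k == i.+1) = false by apply/eqP => e; apply: hb; apply: val_inj.
by rewrite varE.
Qed.

Lemma swapvarE (N i : nat) (hi : (i.+1 < N)%N) (p : {mpoly int[N]}) :
  swapvar i p = \sum_(m <- msupp p)
     p@_m *: 'X_[msw (tperm (Ordinal (ltnW hi)) (Ordinal hi)) m].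
Proof.
rewrite /swapvar comp_mpolyEX; apply: eq_bigr => m _; congr (_ *: _).
rewrite comp_mpolyX (mpolyXE _ (tperm (Ordinal (ltnW hi)) (Ordinal hi))).
by apply: eq_bigr => k _; rewrite tnth_sw mnmE tpermK.
Qed.

Lemma swap_supp (N i : nat) (hi : (i.+1 < N)%N) (p : {mpoly int[N]})
    (Q : pred 'X_{1..N}) :
  (forall m, p@_m != 0 -> Q m) ->
  (forall m, Q m -> Q (msw (tperm (Ordinal (ltnW hi)) (Ordinal hi)) m)) ->
  forall m, (swapvar i p)@_m != 0 -> Q m.
Proof.
move=> hp hQ m; rewrite swapvarE raddf_sum /=; apply: contraR => nQ.
rewrite big1_seq //= => m' hm'; rewrite mcoeffZ mcoeffX.
case: eqP => [e|_]; last by rewrite mulr0.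
exfalso; move: nQ; rewrite -e; apply/negP/negPn; apply: hQ; apply: hp.
by rewrite -mcoeff_msupp.
Qed.

Lemma mdeg_shift (N : nat) (a b : 'I_N) (m : 'X_{1..N}) :
  a != b -> (0 < m b)%N -> mdeg (m + U_(a) - U_(b))%MM = mdeg m.
Proof.
move=> ab hb.
have le : (U_(b) <= m + U_(a))%MM.
  apply/mnm_lepP => k; rewrite mnmDE !mnm1E.
  by case: (b =P k) => [<-|_] /=; lia.
have := mdegD (m + U_(a) - U_(b))%MM U_(b).
by rewrite submK // !mdegD !mdeg1 => /eqP; rewrite eqn_add2r => /eqP <-.
Qed.

Lemma propag (N i : nat) (hi : (i.+1 < N)%N) (f g : {mpoly int[N]}) (d : nat)
    (bd : nat -> nat) :
  (forall m, f@_m != 0 -> mdeg m = d.+1 /\ forall k : 'I_N, (m k <= bd k)%N) ->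
  (var N i - var N i.+1) * g = f - swapvar i f ->
  forall m, g@_m != 0 ->
    [/\ mdeg m = d,
        forall k : 'I_N, k != i :> nat -> k != i.+1 :> nat -> (m k <= bd k)%N
      & forall k : 'I_N, (k == i :> nat) || (k == i.+1 :> nat) ->
          (m k < maxn (bd i) (bd i.+1))%N].
Proof.
move=> hf heq.
pose a : 'I_N := Ordinal (ltnW hi); pose b : 'I_N := Ordinal hi.
have ab : a != b by apply/eqP => /(congr1 val) /=; lia.
pose M := maxn (bd i) (bd i.+1).
pose c := fun k : 'I_N => if (k == a) || (k == b) then M else bd k.
pose Q := fun m : 'X_{1..N} => (mdeg m == d.+1) && [forall k, (m k <= c k)%N].
have hfQ m : f@_m != 0 -> Q m.
  move=> /hf [hd hb]; rewrite /Q hd eqxx /=; apply/forallP => k.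
  apply: (leq_trans (hb k)); rewrite /c.
  case: ifP => [/orP [] /eqP -> | _] //; [exact: leq_maxl | exact: leq_maxr].
have hsQ := swap_supp hfQ.
have hsQ' m : (swapvar i f)@_m != 0 -> Q m.
  apply: hsQ => m' /andP [hd /forallP hb]; apply/andP; split.
    by rewrite msw_mdeg.
  apply/forallP => k; rewrite mnmE.
  have -> : c k = c (tperm a b k).
    by rewrite /c; case: tpermP => [->|->|]; rewrite ?eqxx ?orbT.
  exact: hb.
have hhQ m : (('X_a - 'X_b) * g)@_m != 0 -> Q m.
  have -> : ('X_a - 'X_b : {mpoly int[N]}) = var N i - var N i.+1.
    by rewrite -(varE a) -(varE b).
  rewrite heq mcoeffB.
  case: (f@_m =P 0) => [->|/eqP]; last by move/hfQ.
  by rewrite sub0r oppr_eq0; apply: hsQ'.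
have hhQ' m : (('X_b - 'X_a) * g)@_m != 0 -> Q m.
  by rewrite -opprB mulNr mcoeffN oppr_eq0; apply: hhQ.
have ba : b != a by rewrite eq_sym.
move=> m gm; split.
- apply/eqP; apply: (negbNE (extremal (bad := fun m => mdeg m != d) ab hhQ _ _ gm)).
    by move=> m' hm' hb; rewrite mdeg_shift.
  move=> m' hm'; rewrite /Q mdegD mdeg1 addn1 eqSS (negbTE hm') //.
- move=> k hki hki1.
  have ka : (a == k) = false by apply/negbTE/eqP => e; move: hki; rewrite -e /= eqxx.
  have kb : (b == k) = false by apply/negbTE/eqP => e; move: hki1; rewrite -e /= eqxx.
  rewrite leqNgt; apply: (extremal (bad := fun m => (bd k < m k)%N) ab hhQ _ _ gm).
    by move=> m' hm' _; rewrite mnmBE mnmDE !mnm1E ka kb addn0 subn0.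
  move=> m' hm'; rewrite /Q negb_and; apply/orP; right.
  rewrite negb_forall; apply/existsP; exists k.
  rewrite mnmDE mnm1E ka addn0 /c eq_sym ka eq_sym kb /= -ltnNge //.
- move=> k /orP [] hk.
    have -> : k = a by apply: val_inj; apply/eqP.
    rewrite ltnNge; apply: (extremal (bad := fun m => (M <= m a)%N) ab hhQ _ _ gm).
      move=> m' hm' _; rewrite mnmBE mnmDE !mnm1E eqxx (negbTE ba); lia.
    move=> m' hm'; rewrite /Q negb_and; apply/orP; right.
    rewrite negb_forall; apply/existsP; exists a.
    rewrite mnmDE mnm1E eqxx /c eqxx /= -ltnNge; lia.
  have -> : k = b by apply: val_inj; apply/eqP.
  rewrite ltnNge; apply: (extremal (bad := fun m => (M <= m b)%N) ba hhQ' _ _ gm).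
    move=> m' hm' _; rewrite mnmBE mnmDE !mnm1E eqxx (negbTE ab); lia.
  move=> m' hm'; rewrite /Q negb_and; apply/orP; right.
  rewrite negb_forall; apply/existsP; exists b.
  rewrite mnmDE mnm1E eqxx /c eqxx orbT /= -ltnNge; lia.
Qed.

Definition e0 (N : nat) : 'I_N -> int := fun i => ((i : nat) == 0%N)%:R.

Definition supp0 (N : nat) (m : 'X_{1..N}) : bool :=
  [forall i : 'I_N, ((i : nat) != 0%N) ==> (m i == 0%N)].

Lemma prod_e0 (N : nat) (m : 'X_{1..N}) :
  \prod_(i < N) (e0 i) ^+ (m i) = (if supp0 m then 1 else 0).
Proof.
case: ifP => h.
  apply: big1 => i _; rewrite /e0; case: eqP => [_|/eqP ne]; first by rewrite expr1n.
  by move/forallP: h => /(_ i); rewrite ne /= => /eqP ->.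
move/negbT: h; rewrite negb_forall => /existsP [i]; rewrite negb_imply => /andP [ne nz].
rewrite (bigD1 i) //= /e0 (negbTE ne) expr0n.
by move: nz; case: (m i) => //= _; rewrite mul0r.
Qed.

Lemma mdeg_supp0 (N : nat) (hN : (0 < N)%N) (m : 'X_{1..N}) :
  supp0 m -> mdeg m = m (Ordinal hN).
Proof.
move=> /forallP h; rewrite mdegE (bigD1 (Ordinal hN)) //= big1 ?addn0 //.
move=> i ne; have : (i : nat) != 0%N.
  by apply: contra ne => /eqP e; apply/eqP; apply: val_inj.
by move=> ne'; move: (h i); rewrite ne' /= => /eqP.
Qed.

Lemma eval_hcomp (N : nat) (hN : (0 < N)%N) (k j : nat) :
  meval (@e0 N) (hcomp N k.+1 j) = 1.
Proof.
rewrite /hcomp raddf_sum /=.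
under eq_bigr do rewrite mevalX prod_e0.
pose m0 : 'X_{1..N} := (U_(Ordinal hN) *+ j)%MM.
have hm0 : (mdeg m0 < j.+1)%N by rewrite mdegMn mdeg1 mul1n.
pose b0 : 'X_{1..N < j.+1} := BMultinom hm0.
have s0 : supp0 m0.
  apply/forallP => i; apply/implyP => ne; rewrite mulmnE mnm1E.
  suff -> : (Ordinal hN == i) = false by [].
  by apply/negbTE; apply: contra ne => /eqP <-.
have c0 : (mdeg (b0 : 'X_{1..N}) == j) &&
          [forall k0 : 'I_N, (k.+1 <= k0)%N ==> ((b0 : 'X_{1..N}) k0 == 0%N)].
  rewrite /= mdegMn mdeg1 mul1n eqxx /=; apply/forallP => i; apply/implyP => hi.
  by move/forallP: s0 => /(_ i) /implyP; apply; lia.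
rewrite (bigD1 b0) //= s0 big1 ?addr0 //.
move=> b /andP [/andP [hd _] ne]; case: ifP => // s.
exfalso; move/negP: ne; apply; apply/eqP; apply: val_inj => /=.
apply/mnmP => i; rewrite mulmnE mnm1E.
case: (eqVneq (i : nat) 0%N) => [e|ne].
  have -> : i = Ordinal hN by apply: val_inj.
  by rewrite eqxx mul1n; move/eqP: hd; rewrite (mdeg_supp0 hN s).
have -> : (Ordinal hN == i) = false by apply/negbTE; apply: contra ne => /eqP <-.
by move/forallP: s => /(_ i); rewrite ne /= => /eqP ->.
Qed.

Lemma eval_F (N : nat) (hN : (0 < N)%N) (a : 'I_N -> nat) :
  meval (@e0 N) (\prod_(k < N) hcomp N k.+1 (a k)) = 1.
Proof. by rewrite rmorph_prod /=; apply: big1 => k _; exact: eval_hcomp. Qed.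

Lemma eval_S (N : nat) (hN : (0 < N)%N) (p : {mpoly int[N]}) (L B : nat) :
  (B < L)%N ->
  (forall m, p@_m != 0 -> mdeg m = L /\ (m (Ordinal hN) <= B)%N) ->
  meval (@e0 N) p = 0.
Proof.
move=> hBL hp; rewrite mevalE big1_seq //= => m; rewrite mcoeff_msupp => hm.
rewrite prod_e0; case: ifP => s; last by rewrite mulr0.
have [hd hb] := hp m hm; move: hd; rewrite (mdeg_supp0 hN s) => hd; lia.
Qed.

Definition InvS (n N : nat) (S : {perm 'I_n} -> {mpoly int[N]}) (u : {perm 'I_n}) :=
  forall m : 'X_{1..N}, (S u)@_m != 0 ->
    mdeg m = perm_length u /\ forall k : 'I_N, (m k <= Bd u k)%N.

Lemma inv_w0 (n N : nat) (hnN : (n <= N)%N) (S : {perm 'I_n} -> {mpoly int[N]}) :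
  S (w0 n) = \prod_(k < n) var N k ^+ (n.-1 - k) -> InvS S (w0 n).
Proof.
move=> hS.
pose m0 : 'X_{1..N} := (\sum_(k < n) (U_(widen_ord hnN k) *+ (n.-1 - k)))%MM.
have e : S (w0 n) = 'X_[m0].
  rewrite hS /m0 (big_morph _ (@mpolyXD _ _) (@mpolyX0 _ _)).
  apply: eq_bigr => k _.
  by rewrite (_ : var N k = 'X_(widen_ord hnN k)) ?mpolyXn // (varE (widen_ord hnN k)).
move=> m; rewrite e mcoeffX; case: (eqVneq m0 m) => [<- _|_]; last by rewrite eqxx.
split.
  rewrite w0_len /m0 mdeg_sum; apply: eq_bigr => k _.
  rewrite mdegMn mdeg1 mul1n; lia.
move=> t; rewrite /m0 mnm_sumE.
case: (ltnP t n) => ht.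
  rewrite (bigD1 (Ordinal ht)) //= big1.
    rewrite mulmnE mnm1E (_ : widen_ord hnN (Ordinal ht) == t) ?mul1n ?addn0.
      by have := w0_bd (Ordinal ht); rewrite /=; lia.
    by apply/eqP; apply: val_inj.
  move=> k ne; rewrite mulmnE mnm1E.
  suff -> : (widen_ord hnN k == t) = false by [].
  apply/negbTE; apply: contra ne => /eqP e'; apply/eqP; apply: val_inj.
  by rewrite /= -e'.
rewrite big1 // => k _; rewrite mulmnE mnm1E.
suff -> : (widen_ord hnN k == t) = false by [].
apply/negbTE/eqP => e'; have := congr1 val e'; rewrite /= => ev.
have := ltn_ord k; lia.
Qed.

Lemma len_bound (n : nat) (w : {perm 'I_n}) : (perm_length w <= n * n)%N.
Proof.
rewrite perm_lengthE; apply: (leq_trans (max_card _)).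
by rewrite card_prod card_ord.
Qed.

Lemma step (n N : nat) (hnN : (n <= N)%N) (S : {perm 'I_n} -> {mpoly int[N]})
    (HS : schubert_family S) (u : {perm 'I_n}) :
  (forall w', perm_length w' = (perm_length u).+1 -> InvS S w') -> InvS S u.
Proof.
move=> IH; have [H0 Hrel] := HS.
case: (boolP [exists i : 'I_n, exists j : 'I_n, ((j : nat) == i.+1) && (u i < u j)%N])
  => [hasc|noasc]; last first.
  have -> : u = w0 n; last exact: inv_w0.
  apply: noasc_w0 => a b hab.
  case: (ltngtP (u a) (u b)) => // h.
    exfalso; move/negP: noasc; apply; apply/existsP; exists a; apply/existsP; exists b.
    by rewrite hab eqxx h.
  have : a = b by apply: (@perm_inj _ u); apply: val_inj.
  by move=> e; move: hab; rewrite e; lia.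
pose P k := [exists i : 'I_n, exists j : 'I_n,
               [&& (i : nat) == k, (j : nat) == i.+1 & (u i < u j)%N]].
have exP : exists k, P k.
  move/existsP: hasc => [i /existsP [j /andP [h1 h2]]].
  by exists (i : nat); apply/existsP; exists i; apply/existsP; exists j; rewrite eqxx h1 h2.
case: (ex_minnP exP) => k0 /existsP [i /existsP [j /and3P [/eqP hi0 /eqP hij hu]]] hmin.
have hch : forall a b : 'I_n, (b : nat) = (a : nat).+1 -> (b <= i)%N -> (u b < u a)%N.
  move=> a b hab hbi.
  case: (ltngtP (u a) (u b)) => // h.
    have : (k0 <= a)%N.
      apply: hmin; apply/existsP; exists a; apply/existsP; exists b.
      by rewrite eqxx hab eqxx h.
    lia.
  have : a = b by apply: (@perm_inj _ u); apply: val_inj.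
  by move=> e; move: hab; rewrite e; lia.
have hchain := chain hch.
pose w' := (tperm i j * u)%g.
have hback : (tperm i j * w')%g = u by rewrite /w' tpermKg.
have hlen : (perm_length u).+1 = perm_length w'.
  rewrite -{1}hback; apply: len_desc => //.
  by rewrite /w' !permM tpermL tpermR.
have Iw' := IH w' (esym hlen).
have hiN : (i.+1 < N)%N by rewrite -hij; apply: (leq_trans (ltn_ord j)).
have R := Hrel w' i j hij; rewrite /= hback hlen eqxx hij in R.
move=> m hm.
have [hd hfar hnear] := propag hiN (bd := Bd w') (d := perm_length u)
   (fun m' hm' => let: conj a b := Iw' m' hm' in conj (etrans a (esym hlen)) b) R hm.
split => // t.
case: (boolP (((t : nat) == i) || ((t : nat) == i.+1))) => ht.
  have := hnear t ht; rewrite /w'; have [n1 n2] := Bd_near hij hu.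
  by case/orP: ht => /eqP ->; lia.
rewrite negb_or in ht; case/andP: ht => t1 t2.
apply: (leq_trans (hfar t t1 t2)); exact: Bd_far.
Qed.

Lemma inv_all (n N : nat) (hnN : (n <= N)%N) (S : {perm 'I_n} -> {mpoly int[N]})
    (HS : schubert_family S) : forall u, InvS S u.
Proof.
suff H d : forall u, (n * n - perm_length u <= d)%N -> InvS S u.
  by move=> u; apply: (H _ u (leqnn _)).
elim: d => [|d IH] u hd; apply: (step hnN HS) => w' hw'.
  by have := len_bound w'; lia.
by apply: IH; lia.
Qed.

Theorem lemma19 (n N : nat) (hnN : (n <= N)%N)
    (S : {perm 'I_n} -> {mpoly int[N]}) (HS : schubert_family S)
    (w : {perm 'I_n}) (H321 : contains321 w) :
  ~ complete_hom_monomial (S w).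
Proof.
move=> [a ha].
have hN : (0 < N)%N.
  by case: H321 => x _; apply: (leq_trans _ hnN); apply: (leq_ltn_trans _ (ltn_ord x)).
have hB := B0_lt H321.
have I : InvS S w by apply: inv_all.
have h0 : meval (@e0 N) (S w) = 0.
  apply: (@eval_S N hN (S w) (perm_length w) (Bd w 0) hB) => m hm.
  move: (I m hm) => [hd hk]; split; [exact: hd | exact: (hk (Ordinal hN))].
by move: h0; rewrite ha eval_F.
Qed.
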